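(* Let $P,Q,R$ be unary predicate symbols and $S$ a $0$-ary predicate symbol, and let $$\Gamma = \forall x\, \exists y\, (Py \wedge (Qy \rightarrow Rx)) \wedge \neg \forall x\, Rx, \qquad \Delta = \forall x\, (Px \rightarrow (Qx \vee S)) \rightarrow S.$$ Then the second-order implication $\exists R\,\Gamma\rightarrow\forall S\,\Delta$ is valid in all G-models (for the interpretation of $P,Q$ given by the model): at every state of every G-model it is forced.
   Context: $\neg A$ abbreviates $A\rightarrow\perp$. A G-model is $\mathcal{M}=\langle W,\le,v_0,D,\phi\rangle$: $W$ a nonempty set of states, $\le$ a reflexive transitive relation on $W$, $v_0\in W$ with $v_0\le v$ for all $v\in W$, $D$ a nonempty domain, and for each $k$-ary predicate symbol $P$ a set $\phi(P)\subseteq W\times D^k$ that is monotone: if $v\le w$ and $\langle v,a_1,\dots,a_k\rangle\in\phi(P)$ then $\langle w,a_1,\dots,a_k\rangle\in\phi(P)$. Forcing between states and sentences with constants $\mathbf a$ for elements $a\in D$: $v\Vdash P\mathbf a_1\dots\mathbf a_k$ iff $\langle v,a_1,\dots,a_k\rangle\in\phi(P)$; $\wedge,\vee$ are evaluated pointwise; $v\Vdash A\rightarrow B$ iff for all $w\ge v$, $w\Vdash A$ implies $w\Vdash B$; $\perp$ is never forced; $v\Vdash\exists x A$ iff $v\Vdash A[\mathbf a/x]$ for some $a\in D$; $v\Vdash\forall xA$ iff $v\Vdash A[\mathbf a/x]$ for all $a\in D$. Second-order quantifiers over a $k$-ary predicate variable range over monotone subsets of $W\times D^k$ (for $k=0$: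 upward-closed subsets of $W$): $v\Vdash\exists R\,A$ iff there is a monotone $R'\subseteq W\times D$ such that $v\Vdash A$ in the model obtained by interpreting $R$ as $R'$; $v\Vdash\forall S\,A$ iff for every upward-closed $S'\subseteq W$, $v\Vdash A$ in the model obtained by interpreting $S$ as $S'$. Implication between such formulas is forced as in the first-order clause. *)

(* Defs.v *)
(* plain Rocq. Shallow embedding of G-model forcing:
   a formula is interpreted as the set of states forcing it. *)

Record GModel := {
  W : Type;
  le : W -> W -> Prop;
  le_refl : forall v, le v v;
  le_trans : forall u v w, le u v -> le v w -> le u w;
  v0 : W;
  v0_least : forall v, le v0 v;
  D : Type;
  D_nonempty : inhabited D;
  phiP : W -> D -> Prop;
  phiQ : W -> D -> Prop;
  phiP_mono : forall v w a, le v w -> phiP v a -> phiP w a;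
  phiQ_mono : forall v w a, le v w -> phiQ v a -> phiQ w a
}.

Section Forcing.
Variable M : GModel.

Definition mono1 (R : W M -> D M -> Prop) : Prop :=
  forall v w a, le M v w -> R v a -> R w a.
Definition mono0 (S : W M -> Prop) : Prop :=
  forall v w, le M v w -> S v -> S w.

Definition fand (A B : W M -> Prop) : W M -> Prop := fun v => A v /\ B v.
Definition f_or (A B : W M -> Prop) : W M -> Prop := fun v => A v \/ B v.
Definition fimp (A B : W M -> Prop) : W M -> Prop :=
  fun v => forall w, le M v w -> A w -> B w.
Definition fbot : W M -> Prop := fun _ => False.
Definition fneg (A : W M -> Prop) : W M -> Prop := fimp A fbot.
Definition fex (A : D M -> W M -> Prop) : W M -> Prop := fun v => exists a, A a v.
Definition fall (A : D M -> W M -> Prop) : W M -> Prop := fun v => forall a, A a v.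
Definition atom1 (X : W M -> D M -> Prop) (a : D M) : W M -> Prop := fun v => X v a.
Definition atom0 (S : W M -> Prop) : W M -> Prop := S.

Definition fex2_1 (A : (W M -> D M -> Prop) -> W M -> Prop) : W M -> Prop :=
  fun v => exists R, mono1 R /\ A R v.
Definition fall2_0 (A : (W M -> Prop) -> W M -> Prop) : W M -> Prop :=
  fun v => forall S, mono0 S -> A S v.

Definition Gamma (R : W M -> D M -> Prop) : W M -> Prop :=
  fand (fall (fun x => fex (fun y =>
          fand (atom1 (phiP M) y) (fimp (atom1 (phiQ M) y) (atom1 R x)))))
       (fneg (fall (fun x => atom1 R x))).

Definition Delta (S : W M -> Prop) : W M -> Prop :=
  fimp (fall (fun x => fimp (atom1 (phiP M) x) (f_or (atom1 (phiQ M) x) (atom0 S))))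
       (atom0 S).

End Forcing.

(* Main.v *)
Require Import Defs.
From Stdlib Require Import Classical.

Theorem corollary3p1 :
  forall (M : GModel) (v : W M),
    fimp M (fex2_1 M (Gamma M)) (fall2_0 M (Delta M)) v.
Proof.
  intros M v w _ [R [HR [HG Hn]]] S HS w1 Hw1 H.
  destruct (classic (S w1)) as [Hs|Hs]; [exact Hs|].
  exfalso. apply (Hn w1 Hw1). intro x.
  destruct (HG x) as [y [Py Qy]].
  assert (Py1 : phiP M w1 y) by (eapply phiP_mono; eauto).
  destruct (H y w1 (le_refl M w1) Py1) as [Hq|Hs'].
  - exact (Qy w1 Hw1 Hq).
  - contradiction.
Qed.
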